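(* Assume that the covector $p_a$ satisfies $p_ap^a+\sigma u_au^a=0$ where $\sigma=\sigma_+$ or $\sigma=\sigma_-$. Then the eigenvalues (roots of the characteristic polynomial, counted with multiplicity) of the linear map $\mathcal{M}_b{}^d$ are $\lambda_1=\lambda_2=0$, $$\lambda_3=2\mathcal{L}_F\sigma\,u_au^a,\qquad \lambda_4=\big(4\mathcal{L}_F\sigma-4\mathcal{L}_{FF}+4\mathcal{L}_{FG}G\sigma-\mathcal{L}_{GG}(1+F\sigma)\big)u_au^a .$$
   Context: Let $F_{ab}$ be an antisymmetric tensor on an oriented 4-dimensional Lorentzian manifold with metric $g_{ab}$ (signature $(-,+,+,+)$; indices moved with $g$), $\varepsilon_{abcd}$ the volume form, ${}^{*}F_{ab}=\frac12\varepsilon_{abcd}F^{cd}$, $F=\frac12F_{ab}F^{ab}$, $G=-\frac14F_{ab}{}^{*}F^{ab}$. Let $\mathcal{L}(F,G)$ be smooth with partial derivatives $\mathcal{L}_F,\mathcal{L}_{FF},\mathcal{L}_{FG},\mathcal{L}_{GG}$ evaluated at the background invariants. $P=\mathcal{L}_{FF}\mathcal{L}_{GG}-\mathcal{L}_{FG}^2$, $M=\mathcal{L}_F^2+2\mathcal{L}_F\mathcal{L}_{FG}G-\frac12\mathcal{L}_F\mathcal{L}_{GG}F-PG^2$, $N=2\mathcal{L}_F\mathcal{L}_{FF}+\frac12\mathcal{L}_F\mathcal{L}_{GG}-PF$, $\sigma_\pm=\frac{N}{2M}\pm\sqrt{\frac{N^2}{4M^2}-\frac{P}{M}}$. Standing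 assumptions: $\mathcal{L}_F\neq0$, $M\neq0$, $1+\sigma_\pm F-\sigma_\pm^2G^2\neq0$. For a nonzero covector $p_a$ put $u_a=F_{ab}p^b$, $v_a={}^{*}F_{ab}p^b$ and $\mathcal{M}_b{}^d=-2\mathcal{L}_Fp_ap^a\delta_b^d+2\mathcal{L}_Fp_bp^d-4\mathcal{L}_{FF}u_bu^d+2\mathcal{L}_{FG}(u_bv^d+v_bu^d)-\mathcal{L}_{GG}v_bv^d$. *)

(* Defs.v *)
(* pointwise tensor algebra on a 4-dim real vector space
   (tangent space at a point), components in an arbitrary basis. *)
From HB Require Import structures.
From mathcomp Require Import all_boot all_order all_algebra.
Set Implicit Arguments. Unset Strict Implicit. Unset Printing Implicit Defensive.
Import Order.TTheory GRing.Theory Num.Theory.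
Local Open Scope ring_scope.

Section Tensors.
Variable R : rcfType.

Definition eta4 : 'M[R]_4 :=
  \matrix_(i < 4, j < 4) (if i == j then (if i == 0 :> nat then -1 else 1) else 0).

Definition lorentzian (g : 'M[R]_4) : Prop :=
  exists P : 'M[R]_4, P \in unitmx /\ g = P^T *m eta4 *m P.

Definition ginv (g : 'M[R]_4) : 'M[R]_4 := invmx g.

Definition levi (a b c d : 'I_4) : R :=
  \det (\matrix_(i < 4, j < 4) ((tnth [tuple a; b; c; d] i == j)%:R : R)).

(* Volume form epsilon_{abcd} = c0 [abcd], where c0^2 = -det g
   (i.e. c0 = +- sqrt|det g|, sign = orientation). *)
Definition volume_form (g : 'M[R]_4) (c0 : R) : Prop := c0 ^+ 2 = - \det g.
Definition eps (c0 : R) (a b c d : 'I_4) : R := c0 * levi a b c d.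

Definition raise2 (g T : 'M[R]_4) : 'M[R]_4 := ginv g *m T *m (ginv g)^T.

Definition hodge (g : 'M[R]_4) (c0 : R) (Fm : 'M[R]_4) : 'M[R]_4 :=
  \matrix_(a < 4, b < 4)
    (2^-1 * \sum_(c < 4) \sum_(d < 4) eps c0 a b c d * raise2 g Fm c d).

Definition contr2 (g T S : 'M[R]_4) : R :=
  \sum_(a < 4) \sum_(b < 4) T a b * raise2 g S a b.

Definition invarF (g Fm : 'M[R]_4) : R := 2^-1 * contr2 g Fm Fm.
Definition invarG (g : 'M[R]_4) (c0 : R) (Fm : 'M[R]_4) : R :=
  - (4^-1 * contr2 g Fm (hodge g c0 Fm)).

Definition raise1 (g : 'M[R]_4) (p : 'I_4 -> R) (a : 'I_4) : R :=
  \sum_(b < 4) ginv g a b * p b.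
Definition dot (g : 'M[R]_4) (x y : 'I_4 -> R) : R :=
  \sum_(a < 4) x a * raise1 g y a.
Definition contrv (g T : 'M[R]_4) (p : 'I_4 -> R) (a : 'I_4) : R :=
  \sum_(b < 4) T a b * raise1 g p b.

Definition Pc (LFF LFG LGG : R) : R := LFF * LGG - LFG ^+ 2.
Definition Mc (LF LFF LFG LGG F G : R) : R :=
  LF ^+ 2 + 2 * LF * LFG * G - 2^-1 * LF * LGG * F - Pc LFF LFG LGG * G ^+ 2.
Definition Nc (LF LFF LFG LGG F : R) : R :=
  2 * LF * LFF + 2^-1 * LF * LGG - Pc LFF LFG LGG * F.
Definition sigma_disc (LF LFF LFG LGG F G : R) : R :=
  let M := Mc LF LFF LFG LGG F G in let N := Nc LF LFF LFG LGG F in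
  N ^+ 2 / (4 * M ^+ 2) - Pc LFF LFG LGG / M.
Definition sigma_plus (LF LFF LFG LGG F G : R) : R :=
  Nc LF LFF LFG LGG F / (2 * Mc LF LFF LFG LGG F G)
  + Num.sqrt (sigma_disc LF LFF LFG LGG F G).
Definition sigma_minus (LF LFF LFG LGG F G : R) : R :=
  Nc LF LFF LFG LGG F / (2 * Mc LF LFF LFG LGG F G)
  - Num.sqrt (sigma_disc LF LFF LFG LGG F G).

Definition Mmat (g : 'M[R]_4) (c0 : R) (Fm : 'M[R]_4) (LF LFF LFG LGG : R)
  (p : 'I_4 -> R) : 'M[R]_4 :=
  let u := contrv g Fm p in
  let v := contrv g (hodge g c0 Fm) p in
  \matrix_(b < 4, d < 4)
    (- 2 * LF * dot g p p * (b == d)%:R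
     + 2 * LF * p b * raise1 g p d
     - 4 * LFF * u b * raise1 g u d
     + 2 * LFG * (u b * raise1 g v d + v b * raise1 g u d)
     - LGG * v b * raise1 g v d).

End Tensors.

(* Main.v *)
Require Import Defs.
From HB Require Import structures.
From mathcomp Require Import all_boot all_order all_algebra.
Import Order.TTheory GRing.Theory Num.Theory.
Local Open Scope ring_scope.
From mathcomp Require Import ring lra.

Set Implicit Arguments. Unset Strict Implicit. Unset Printing Implicit Defensive.


Section Dets.
Variable R : comNzRingType.

Lemma det2E (m : nat -> nat -> R) :
  \det (\matrix_(i < 2, j < 2) m i j) = m 0 0 * m 1 1 - m 0 1 * m 1 0.
Proof.
rewrite (expand_det_row _ ord0) !big_ord_recr big_ord0 /= /cofactor !det_mx11 !mxE /=.
ring.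
Qed.

Lemma det3E (m : nat -> nat -> R) :
  \det (\matrix_(i < 3, j < 3) m i j) =
  m 0 0 * (m 1 1 * m 2 2 - m 1 2 * m 2 1)
  - m 0 1 * (m 1 0 * m 2 2 - m 1 2 * m 2 0)
  + m 0 2 * (m 1 0 * m 2 1 - m 1 1 * m 2 0).
Proof.
rewrite (expand_det_row _ ord0) !big_ord_recr big_ord0 /= /cofactor.
pose mm (j : nat) a b := m (bump 0 a) (bump j b).
have E (j : 'I_3) : row' ord0 (col' j (\matrix_(i < 3, j < 3) m i j)) =
   \matrix_(k < 2, l < 2) mm j k l.
  by apply/matrixP => k l; rewrite !mxE.
rewrite !E !det2E /mm !mxE /=.
ring.
Qed.

Lemma det4E (m : nat -> nat -> R) :
  \det (\matrix_(i < 4, j < 4) m i j) =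
  m 0 0 * (m 1 1 * (m 2 2 * m 3 3 - m 2 3 * m 3 2) - m 1 2 * (m 2 1 * m 3 3 - m 2 3 * m 3 1) + m 1 3 * (m 2 1 * m 3 2 - m 2 2 * m 3 1))
- m 0 1 * (m 1 0 * (m 2 2 * m 3 3 - m 2 3 * m 3 2) - m 1 2 * (m 2 0 * m 3 3 - m 2 3 * m 3 0) + m 1 3 * (m 2 0 * m 3 2 - m 2 2 * m 3 0))
+ m 0 2 * (m 1 0 * (m 2 1 * m 3 3 - m 2 3 * m 3 1) - m 1 1 * (m 2 0 * m 3 3 - m 2 3 * m 3 0) + m 1 3 * (m 2 0 * m 3 1 - m 2 1 * m 3 0))
- m 0 3 * (m 1 0 * (m 2 1 * m 3 2 - m 2 2 * m 3 1) - m 1 1 * (m 2 0 * m 3 2 - m 2 2 * m 3 0) + m 1 2 * (m 2 0 * m 3 1 - m 2 1 * m 3 0)).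
Proof.
rewrite (expand_det_row _ ord0) !big_ord_recr big_ord0 /= /cofactor.
pose mm (j : nat) a b := m (bump 0 a) (bump j b).
have E (j : 'I_4) : row' ord0 (col' j (\matrix_(i < 4, j < 4) m i j)) =
   \matrix_(k < 3, l < 3) mm j k l.
  by apply/matrixP => k l; rewrite !mxE.
rewrite !E !det3E /mm !mxE /=.
ring.
Qed.
End Dets.


Section Lev.
Variable R : rcfType.

Definition lvS (a b c d : nat) : R :=
  if [&& a != b, a != c, a != d, b != c, b != d & c != d] then
    (if odd ((b < a) + (c < a) + (d < a) + (c < b) + (d < b) + (d < c))%N then -1 else 1)
  else 0.

Lemma leviS (a b c d : 'I_4) : levi R a b c d = lvS a b c d.
Proof.
rewrite /levi.
pose mm x y := ((nth 0%N [:: (a:nat); (b:nat); (c:nat); (d:nat)] x == y)%:R : R).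
have -> : (\matrix_(i < 4, j < 4) ((tnth [tuple a; b; c; d] i == j)%:R : R)) =
  \matrix_(i < 4, j < 4) mm i j.
  apply/matrixP => i j; rewrite !mxE.
  by case: i => [[|[|[|[|i]]]] Hi].
rewrite det4E /mm /=; clear mm.
by case: a => [[|[|[|[|a]]]] Ha] //; case: b => [[|[|[|[|b]]]] Hb] //;
   case: c => [[|[|[|[|c]]]] Hc] //; case: d => [[|[|[|[|d]]]] Hd] //=; rewrite /lvS /=; ring.
Qed.

End Lev.


Section Lev.
Variable R : rcfType.

Lemma sum4 (F : 'I_4 -> R) : \sum_(i < 4) F i =
  F (@Ordinal 4 0 isT) + F (@Ordinal 4 1 isT) + F (@Ordinal 4 2 isT) + F (@Ordinal 4 3 isT).
Proof. rewrite !big_ord_recr big_ord0 /= add0r.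
by congr (_ + _ + _ + _); congr F; apply: val_inj. Qed.

Lemma L0 (m : nat -> nat -> R) :
  \sum_(a < 4) \sum_(b < 4) \sum_(c < 4) \sum_(d < 4)
     lvS R a b c d * (m 0%N a * m 1%N b * m 2%N c * m 3%N d)
  = \det (\matrix_(i < 4, j < 4) m i j).
Proof.
rewrite det4E.
rewrite !sum4.
rewrite /lvS /=.
ring.
Qed.

Lemma Lp (S : 'M[R]_4) (i j e f : 'I_4) :
  \sum_(a < 4) \sum_(b < 4) \sum_(c < 4) \sum_(d < 4)
     levi R a b c d * (S i a * S j b * S e c * S f d) = levi R i j e f * \det S.
Proof.
pose m x y := S (nth i [:: i; j; e; f] x) (inord y).
have Hdet : \det (\matrix_(x < 4, y < 4) m x y) = levi R i j e f * \det S.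
  rewrite /levi -det_mulmx; congr (\det _); apply/matrixP => x y; rewrite !mxE.
  rewrite (bigD1 (tnth [tuple i; j; e; f] x)) //= mxE (eqxx (tnth [tuple i; j; e; f] x)) mul1r big1 ?addr0; last first.
    by move=> k /negPf; rewrite mxE eq_sym => ->; rewrite mul0r.
  by rewrite /m inord_val; case: x => [[|[|[|[|x]]]] Hx].
rewrite -Hdet -L0.
apply: eq_bigr => a _; apply: eq_bigr => b _; apply: eq_bigr => c _; apply: eq_bigr => d _.
by rewrite leviS /m /= !inord_val.
Qed.
End Lev.


Section Dual.
Variable R : rcfType.

Definition dualS (Y : 'M[R]_4) : 'M[R]_4 :=
  \matrix_(a < 4, b < 4) (2^-1 * \sum_(c < 4) \sum_(d < 4) levi R a b c d * Y c d).

Lemma I2 (S Y : 'M[R]_4) : S *m dualS (S^T *m Y *m S) *m S^T = \det S *: dualS Y.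
Proof.
apply/matrixP => i j.
have E1 c d : (S^T *m Y *m S) c d = \sum_(e < 4) \sum_(f < 4) Y e f * (S e c * S f d).
  rewrite mxE; under eq_bigr => f _ do rewrite mxE big_distrl /=.
  rewrite exchange_big; apply: eq_bigr => e _; apply: eq_bigr => f _.
  by rewrite !mxE; ring.
have E2 a b : \sum_(c < 4) \sum_(d < 4) levi R a b c d * (S^T *m Y *m S) c d =
   \sum_(e < 4) \sum_(f < 4) Y e f * (\sum_(c < 4) \sum_(d < 4) levi R a b c d * (S e c * S f d)).
  under eq_bigr => c _ do under eq_bigr => d _ do rewrite E1 big_distrr /=.
  under eq_bigr => c _ do rewrite exchange_big /=.
  rewrite exchange_big; apply: eq_bigr => e _.
  under eq_bigr => c _ do under eq_bigr => f _ do rewrite big_distrr /=.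
  under eq_bigr => c _ do rewrite exchange_big /=.
  rewrite exchange_big; apply: eq_bigr => f _.
  rewrite big_distrr; apply: eq_bigr => c _; rewrite big_distrr; apply: eq_bigr => d _ /=.
  ring.
rewrite !mxE.
under eq_bigr => b _ do rewrite mxE big_distrl /=.
under eq_bigr => b _ do under eq_bigr => a _ do rewrite !mxE E2 /=.
rewrite exchange_big /=.
pose X a b e f := \sum_(c < 4) \sum_(d < 4) levi R a b c d * (S e c * S f d).
transitivity (2^-1 * \sum_(a < 4) \sum_(b < 4) \sum_(e < 4) \sum_(f < 4)
      Y e f * (S i a * S j b * X a b e f)).
  rewrite big_distrr; apply: eq_bigr => a _ /=; rewrite big_distrr; apply: eq_bigr => b _ /=.
  set Z := \sum_(e < 4) _.
  have -> : S i a * (2^-1 * Z) * S j b = 2^-1 * (S i a * S j b * Z) by ring.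
  congr (_ * _); rewrite /Z big_distrr; apply: eq_bigr => e _ /=.
  rewrite big_distrr; apply: eq_bigr => f _ /=; rewrite /X; ring.
rewrite pair_bigA /=.
under eq_bigr => p _ do rewrite pair_bigA /=.
rewrite exchange_big /=.
rewrite [RHS]mulrCA; congr (_ * _).
rewrite [RHS]big_distrr /=.
under [RHS]eq_bigr => e _ do rewrite big_distrr /=.
rewrite [RHS]pair_bigA /=; apply: eq_bigr => q _.
have -> : \det S * (levi R i j q.1 q.2 * Y q.1 q.2) = Y q.1 q.2 * (levi R i j q.1 q.2 * \det S) by ring.
rewrite -Lp big_distrr -(pair_bigA _ (fun a b => Y q.1 q.2 * (S i a * S j b * X a b q.1 q.2))) /=; apply: eq_bigr => a _; rewrite big_distrr; apply: eq_bigr => b _ /=.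
rewrite /X !big_distrr /=; apply: eq_bigr => c _; rewrite !big_distrr /=; apply: eq_bigr => d _.
ring.
Qed.
End Dual.


Section Flat.
Variable R : rcfType.

Definition MN m n (a : nat -> nat -> R) : 'M[R]_(m, n) := \matrix_(i < m, j < n) a i j.

Lemma MN_mul m n (a b : nat -> nat -> R) : MN m 4 a *m MN 4 n b =
  MN m n (fun i j => a i 0%N * b 0%N j + a i 1%N * b 1%N j + a i 2%N * b 2%N j + a i 3%N * b 3%N j).
Proof. by apply/matrixP => i j; rewrite !mxE sum4 /= !mxE. Qed.

Lemma MN_tr m n (a : nat -> nat -> R) : (MN m n a)^T = MN n m (fun i j => a j i).
Proof. by apply/matrixP => i j; rewrite !mxE. Qed.

Lemma MN_scale m n (s : R) (a : nat -> nat -> R) : s *: MN m n a = MN m n (fun i j => s * a i j).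
Proof. by apply/matrixP => i j; rewrite !mxE. Qed.

Lemma MN_entry m n (a : nat -> nat -> R) i j : MN m n a i j = a i j.
Proof. by rewrite mxE. Qed.

Lemma MN_trace (a : nat -> nat -> R) : \tr (MN 4 4 a) = a 0%N 0%N + a 1%N 1%N + a 2%N 2%N + a 3%N 3%N.
Proof. by rewrite /mxtrace sum4 /= !mxE. Qed.

Definition dual16 (a : nat -> nat -> R) (x y : nat) : R :=
  2^-1 * (
   lvS R x y 0 0 * a 0%N 0%N + lvS R x y 0 1 * a 0%N 1%N + lvS R x y 0 2 * a 0%N 2%N + lvS R x y 0 3 * a 0%N 3%N +
   lvS R x y 1 0 * a 1%N 0%N + lvS R x y 1 1 * a 1%N 1%N + lvS R x y 1 2 * a 1%N 2%N + lvS R x y 1 3 * a 1%N 3%N +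
   lvS R x y 2 0 * a 2%N 0%N + lvS R x y 2 1 * a 2%N 1%N + lvS R x y 2 2 * a 2%N 2%N + lvS R x y 2 3 * a 2%N 3%N +
   lvS R x y 3 0 * a 3%N 0%N + lvS R x y 3 1 * a 3%N 1%N + lvS R x y 3 2 * a 3%N 2%N + lvS R x y 3 3 * a 3%N 3%N).

Lemma MN_dual (a : nat -> nat -> R) : dualS (MN 4 4 a) = MN 4 4 (dual16 a).
Proof.
apply/matrixP => i j; rewrite !mxE /dual16; congr (_ * _).
rewrite sum4 /= !sum4 /= !leviS !mxE /=; ring.
Qed.

Definition et (i j : nat) : R := if i == j then (if i == 0%N then -1 else 1) else 0.
Lemma eta4E : eta4 R = MN 4 4 et.
Proof. by apply/matrixP => i j; rewrite !mxE. Qed.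

Definition asym (x01 x02 x03 x12 x13 x23 : R) (i j : nat) : R :=
  match i, j with
  | 0%N, 1%N => x01 | 0%N, 2%N => x02 | 0%N, 3%N => x03 | 1%N, 2%N => x12 | 1%N, 3%N => x13 | 2%N, 3%N => x23
  | 1%N, 0%N => - x01 | 2%N, 0%N => - x02 | 3%N, 0%N => - x03 | 2%N, 1%N => - x12 | 3%N, 1%N => - x13 | 3%N, 2%N => - x23
  | _, _ => 0 end.

Definition fdot (x y : 'cV[R]_4) : R := (x^T *m eta4 R *m y) 0 0.

Lemma MN_ext m n (a b : nat -> nat -> R) :
  (forall i j, (i < m)%N -> (j < n)%N -> a i j = b i j) -> MN m n a = MN m n b.
Proof. by move=> H; apply/matrixP => i j; rewrite !mxE H. Qed.

Lemma DFlat (x01 x02 x03 x12 x13 x23 : R) :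
  dualS (eta4 R *m MN 4 4 (asym x01 x02 x03 x12 x13 x23) *m eta4 R) =
  MN 4 4 (asym x23 (- x13) x12 (- x03) x02 (- x01)).
Proof.
rewrite eta4E !MN_mul MN_dual; apply: MN_ext => i j Hi Hj.
rewrite /dual16.
case: i Hi => [|[|[|[|i]]]] Hi //; case: j Hj => [|[|[|[|j]]]] Hj //;
  by rewrite /lvS /asym /et /=; field.
Qed.

Section FlatIds.
Variables (x01 x02 x03 x12 x13 x23 q0 q1 q2 q3 : R).
Let Fp := MN 4 4 (asym x01 x02 x03 x12 x13 x23).
Let Dp := MN 4 4 (asym x23 (- x13) x12 (- x03) x02 (- x01)).
Let pp := MN 4 1 (fun i _ => nth 0 [:: q0; q1; q2; q3] i).

Lemma flat_pu : fdot pp (Fp *m eta4 R *m pp) = 0.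
Proof.
rewrite /fdot /Fp /pp eta4E !(MN_tr, MN_mul) MN_entry /asym /et /=; ring.
Qed.

Lemma flat_pv : fdot pp (Dp *m eta4 R *m pp) = 0.
Proof.
rewrite /fdot /Dp /pp eta4E !(MN_tr, MN_mul) MN_entry /asym /et /=; ring.
Qed.

Lemma flat_uv : 4 * fdot (Fp *m eta4 R *m pp) (Dp *m eta4 R *m pp) =
   \tr (Fp^T *m eta4 R *m Dp *m eta4 R) * fdot pp pp.
Proof.
rewrite /fdot /Fp /Dp /pp eta4E !(MN_tr, MN_mul) MN_trace !MN_entry /asym /et /=; ring.
Qed.

Lemma flat_vv : 2 * fdot (Dp *m eta4 R *m pp) (Dp *m eta4 R *m pp) =
   2 * fdot (Fp *m eta4 R *m pp) (Fp *m eta4 R *m pp) - \tr (Fp^T *m eta4 R *m Fp *m eta4 R) * fdot pp pp.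
Proof.
rewrite /fdot /Fp /Dp /pp eta4E !(MN_tr, MN_mul) MN_trace !MN_entry /asym /et /=; ring.
Qed.
End FlatIds.
End Flat.

Section FlatA.
Variable R : rcfType.

Lemma flatA (A : 'M[R]_4) (q : 'cV[R]_4) : A^T = - A ->
  let D := dualS (eta4 R *m A *m eta4 R) in
  [/\ fdot q (A *m eta4 R *m q) = 0, fdot q (D *m eta4 R *m q) = 0,
      4 * fdot (A *m eta4 R *m q) (D *m eta4 R *m q) = \tr (A^T *m eta4 R *m D *m eta4 R) * fdot q q &
      2 * fdot (D *m eta4 R *m q) (D *m eta4 R *m q) =
        2 * fdot (A *m eta4 R *m q) (A *m eta4 R *m q) - \tr (A^T *m eta4 R *m A *m eta4 R) * fdot q q].
Proof.
move=> AT D.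
have Aa i j : A j i = - A i j by have := congr1 (fun M : 'M[R]_4 => M i j) AT; rewrite !mxE.
have Ad i : A i i = 0 by have := Aa i i; lra.
have ordE (i : 'I_4) : i = inord i by rewrite inord_val.
have AE : A = MN 4 4 (asym (A (inord 0) (inord 1)) (A (inord 0) (inord 2)) (A (inord 0) (inord 3))
                           (A (inord 1) (inord 2)) (A (inord 1) (inord 3)) (A (inord 2) (inord 3))).
  apply/matrixP => i j; rewrite /MN mxE.
  case: i => [[|[|[|[|i]]]] Hi] //; case: j => [[|[|[|[|j]]]] Hj] //;
    rewrite /= (ordE (Ordinal Hi)) (ordE (Ordinal Hj)) /= ?Ad //; apply: Aa.
have qE : q = MN 4 1 (fun i _ => nth 0 [:: q (inord 0) 0; q (inord 1) 0; q (inord 2) 0; q (inord 3) 0] i).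
  apply/matrixP => i j; rewrite /MN mxE [j]ord1.
  by case: i => [[|[|[|[|i]]]] Hi] //; rewrite /= (ordE (Ordinal Hi)) /=.
rewrite /D AE qE DFlat.
split; [exact: flat_pu | exact: flat_pv | exact: flat_uv | exact: flat_vv].
Qed.
End FlatA.


Section Tr.
Variable R : rcfType.
Implicit Types (g Fm T S : 'M[R]_4) (x y p : 'I_4 -> R).

Definition vc (x : 'I_4 -> R) : 'cV[R]_4 := \col_i x i.

Lemma raise1E g y : vc (raise1 g y) = ginv g *m vc y.
Proof. by apply/matrixP => i j; rewrite !mxE /raise1; apply: eq_bigr => b _; rewrite !mxE. Qed.

Lemma dotE g x y : dot g x y = ((vc x)^T *m ginv g *m vc y) 0 0.
Proof.
rewrite -mulmxA -raise1E mxE /dot; apply: eq_bigr => a _; by rewrite !mxE.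
Qed.

Lemma contrvE g T x : vc (contrv g T x) = T *m ginv g *m vc x.
Proof.
rewrite -mulmxA -raise1E; apply/matrixP => i j; rewrite !mxE /contrv; apply: eq_bigr => b _; by rewrite !mxE.
Qed.

Lemma contr2E g T S : contr2 g T S = \tr (T^T *m raise2 g S).
Proof.
rewrite /contr2 /mxtrace exchange_big; apply: eq_bigr => b _; rewrite mxE.
apply: eq_bigr => a _; by rewrite !mxE.
Qed.

Lemma hodgeE g c0 Fm : hodge g c0 Fm = c0 *: dualS (raise2 g Fm).
Proof.
apply/matrixP => a b; rewrite !mxE mulrCA; congr (_ * _).
rewrite big_distrr; apply: eq_bigr => c _; rewrite big_distrr; apply: eq_bigr => d _ /=.
by rewrite /eps mulrA.
Qed.

Lemma inv_right n (A B : 'M[R]_n) : A *m B = 1%:M -> invmx A = B.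
Proof.
move=> AB; have [Au _] := mulmx1_unit AB.
by rewrite -[invmx A]mulmx1 -AB mulmxA mulVmx // mul1mx.
Qed.

Lemma ee : eta4 R *m eta4 R = 1%:M.
Proof.
rewrite eta4E MN_mul; apply/matrixP => i j; rewrite /MN !mxE.
by case: i => [[|[|[|[|i]]]] Hi] //; case: j => [[|[|[|[|j]]]] Hj] //; rewrite /et /=; ring.
Qed.

Lemma etT : (eta4 R)^T = eta4 R.
Proof.
apply/matrixP => i j; rewrite !mxE.
by case: i => [[|[|[|[|i]]]] Hi] //; case: j => [[|[|[|[|j]]]] Hj].
Qed.

Lemma det_eta : \det (eta4 R) = -1.
Proof. by rewrite eta4E /MN det4E /et /=; ring. Qed.

Lemma fdotZr (a : R) (x y : 'cV[R]_4) : fdot x (a *: y) = a * fdot x y.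
Proof. by rewrite /fdot -scalemxAr mxE. Qed.

Lemma fdotZl (a : R) (x y : 'cV[R]_4) : fdot (a *: x) y = a * fdot x y.
Proof. by rewrite /fdot linearZ /= -!scalemxAl mxE. Qed.


Lemma transport g c0 Fm p : lorentzian g -> volume_form g c0 -> Fm^T = - Fm ->
  let u := contrv g Fm p in let v := contrv g (hodge g c0 Fm) p in
  [/\ dot g p u = 0, dot g p v = 0, dot g u v = - invarG g c0 Fm * dot g p p,
      dot g v v = dot g u u - invarF g Fm * dot g p p &
      forall x y, dot g x y = dot g y x].
Proof.
move=> [P [Pu gE]] vf FmA u v.
pose Q := invmx P.
have QP : Q *m P = 1%:M := mulVmx Pu.
have PQ : P *m Q = 1%:M := mulmxV Pu.
have PtQt : P^T *m Q^T = 1%:M by rewrite -trmx_mul QP trmx1.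
have QtPt : Q^T *m P^T = 1%:M by rewrite -trmx_mul PQ trmx1.
have cPQ (m : nat) (X : 'M[R]_(m, 4)) : X *m P *m Q = X by rewrite -mulmxA PQ mulmx1.
have cQP (m : nat) (X : 'M[R]_(m, 4)) : X *m Q *m P = X by rewrite -mulmxA QP mulmx1.
have cPtQt (m : nat) (X : 'M[R]_(m, 4)) : X *m P^T *m Q^T = X by rewrite -mulmxA PtQt mulmx1.
have cQtPt (m : nat) (X : 'M[R]_(m, 4)) : X *m Q^T *m P^T = X by rewrite -mulmxA QtPt mulmx1.
have hE : ginv g = Q *m eta4 R *m Q^T.
  rewrite /ginv gE; apply: inv_right.
  by rewrite !mulmxA cPQ -(mulmxA (P^T) (eta4 R) (eta4 R)) ee mulmx1 PtQt.
have hT : (ginv g)^T = ginv g by rewrite hE !trmx_mul trmxK etT mulmxA.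
have tr11 (M : 'M[R]_1) : M 0 0 = M^T 0 0 by rewrite mxE.
have dsym x y : dot g x y = dot g y x.
  by rewrite !dotE [LHS]tr11 !trmx_mul trmxK hT mulmxA.
pose pp := Q^T *m vc p.
have pcE : vc p = P^T *m pp by rewrite /pp mulmxA PtQt mul1mx.
pose Fp := Q^T *m Fm *m Q.
have FmE : Fm = P^T *m Fp *m P by rewrite /Fp !mulmxA PtQt mul1mx cQP.
have FpT : Fp^T = - Fp by rewrite /Fp !trmx_mul trmxK FmA mulNmx mulmxN mulmxA.
have flatd (x y : 'cV[R]_4) : ((P^T *m x)^T *m ginv g *m (P^T *m y)) 0 0 = fdot x y.
  by rewrite hE trmx_mul trmxK !mulmxA cPQ cQtPt.
have uE : vc u = P^T *m (Fp *m eta4 R *m pp).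
  by rewrite /u contrvE hE pcE FmE !mulmxA cPQ cQtPt.
pose Dm := dualS (eta4 R *m Fp *m eta4 R).
have r2 : raise2 g Fm = Q *m (eta4 R *m Fp *m eta4 R) *m Q^T.
  by rewrite /raise2 hT hE FmE !mulmxA cQtPt cPQ.
have dQ : dualS (Q *m (eta4 R *m Fp *m eta4 R) *m Q^T) = \det Q *: (P^T *m Dm *m P).
  have := I2 (Q^T) (eta4 R *m Fp *m eta4 R); rewrite trmxK det_tr => h.
  set X := dualS _.
  have -> : X = P^T *m (Q^T *m X *m Q) *m P by rewrite !mulmxA PtQt mul1mx cQP.
  by rewrite h -/Dm -scalemxAr -scalemxAl.
pose s := c0 * \det Q.
have HE : hodge g c0 Fm = s *: (P^T *m Dm *m P) by rewrite hodgeE r2 dQ scalerA.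
have vE : vc v = P^T *m (s *: (Dm *m eta4 R *m pp)).
  rewrite /v contrvE HE hE pcE -!scalemxAl -scalemxAr; congr (_ *: _).
  by rewrite !mulmxA cPQ cQtPt.
have s2 : s ^+ 2 = 1.
  have dPQ : \det P * \det Q = 1 by rewrite -det_mulmx PQ det1.
  rewrite /s exprMn vf gE !det_mulmx det_tr det_eta.
  by transitivity ((\det P * \det Q) ^+ 2); [ring | rewrite dPQ expr1n].
have [fpu fpv fuv fvv] := flatA pp FpT.
have Epp : dot g p p = fdot pp pp by rewrite dotE pcE flatd.
have Epu : dot g p u = 0 by rewrite dotE pcE uE flatd fpu.
have Epv : dot g p v = 0 by rewrite dotE pcE vE flatd fdotZr fpv mulr0.
have Euv : dot g u v = s * fdot (Fp *m eta4 R *m pp) (Dm *m eta4 R *m pp)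
  by rewrite dotE uE vE flatd fdotZr.
have Euu : dot g u u = fdot (Fp *m eta4 R *m pp) (Fp *m eta4 R *m pp) by rewrite dotE uE flatd.
have Evv : dot g v v = fdot (Dm *m eta4 R *m pp) (Dm *m eta4 R *m pp).
  by rewrite dotE vE flatd fdotZl fdotZr mulrA -expr2 s2 mul1r.
have EF : invarF g Fm = 2^-1 * \tr (Fp^T *m eta4 R *m Fp *m eta4 R).
  rewrite /invarF contr2E r2 FmE !trmx_mul trmxK !mulmxA trmxK PtQt mul1mx cQP.
  by rewrite mxtrace_mulC !mulmxA.
have r2H : raise2 g (hodge g c0 Fm) = s *: (Q *m (eta4 R *m Dm *m eta4 R) *m Q^T).
  rewrite /raise2 hT HE hE -scalemxAr -scalemxAl; congr (_ *: _).
  by rewrite !mulmxA cQtPt cPQ.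
have EG : invarG g c0 Fm = - (4^-1 * (s * \tr (Fp^T *m eta4 R *m Dm *m eta4 R))).
  rewrite /invarG contr2E r2H -scalemxAr mxtraceZ FmE !trmx_mul trmxK !mulmxA.
  by rewrite trmxK PtQt mul1mx cQP mxtrace_mulC !mulmxA.
split => //.
- rewrite Euv EG Epp opprK.
  set a := fdot _ _ in fuv *; set t := \tr _ in fuv *; set b := fdot pp pp in fuv *.
  transitivity (4^-1 * s * (4 * a)); first by field.
  by rewrite fuv; field.
- rewrite Evv Euu EF Epp.
  set a := fdot (Dm *m _ *m _) _ in fvv *; set t := \tr _ in fvv *; set b := fdot pp pp in fvv *.
  set c := fdot _ _ in fvv *.
  transitivity (2^-1 * (2 * a)); first by field.
  by rewrite fvv; field.
Qed.
End Tr.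


Lemma sylv (T : idomainType) (t : T) (X : 'M[T]_(4, 3)) (Z : 'M[T]_(3, 4)) :
  t != 0 -> \det (t%:M - X *m Z) = t * \det (t%:M - Z *m X).
Proof.
move=> t0.
pose B1 := block_mx (1%:M : 'M[T]_4) 0 (- Z) (t%:M : 'M[T]_3).
pose B2 := block_mx (t%:M : 'M[T]_4) X Z (1%:M : 'M[T]_3).
have e1 : B1 *m B2 = block_mx (t%:M) X 0 (t%:M - Z *m X).
  rewrite /B1 /B2 mulmx_block !mul1mx !mul0mx !addr0 mulmx1 mulNmx mul_mx_scalar mul_scalar_mx.
  rewrite addNr; congr block_mx; rewrite addrC; congr (_ + _); exact: mulNmx.
have e2 : B2 = block_mx 1%:M X 0 1%:M *m block_mx (t%:M - X *m Z) 0 Z 1%:M.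
  by rewrite /B2 mulmx_block !mul1mx !mul0mx !mulmx1 !add0r subrK.
have d1 : \det B1 = t ^+ 3 by rewrite /B1 det_lblock det1 det_scalar mul1r.
have := congr1 determinant e1.
rewrite det_mulmx d1 e2 det_mulmx det_ublock det_lblock !det1 !mul1r mulr1 det_ublock det_scalar.
move=> h; apply: (@mulfI _ (t ^+ 3)); first by rewrite expf_neq0.
by rewrite h exprSr mulrA.
Qed.

Lemma det3K (R : comNzRingType) (t : {poly R}) (k : nat -> nat -> R) :
  \det (t%:M - map_mx polyC (\matrix_(i < 3, j < 3) k i j)) =
  let m := fun i j : nat => (i == j)%:R * t - (k i j)%:P in
  m 0%N 0%N * (m 1%N 1%N * m 2%N 2%N - m 1%N 2%N * m 2%N 1%N)
  - m 0%N 1%N * (m 1%N 0%N * m 2%N 2%N - m 1%N 2%N * m 2%N 0%N)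
  + m 0%N 2%N * (m 1%N 0%N * m 2%N 1%N - m 1%N 1%N * m 2%N 0%N).
Proof.
pose m := fun i j : nat => (i == j)%:R * t - (k i j)%:P.
have -> : t%:M - map_mx polyC (\matrix_(i < 3, j < 3) k i j) = \matrix_(i < 3, j < 3) m i j.
  by apply/matrixP => i j; rewrite !mxE /m mulr_natl.
by rewrite det3E.
Qed.

Lemma final_alg (R : rcfType) (LF LFF LFG LGG F G U sg : R) (k : nat -> nat -> R) :
  (4 * LF ^+ 2 + 8 * LF * LFG * G - 2 * LF * LGG * F - 4 * (LFF * LGG - LFG ^+ 2) * G ^+ 2) * sg ^+ 2
   - (8 * LF * LFF + 2 * LF * LGG - 4 * (LFF * LGG - LFG ^+ 2) * F) * sg + 4 * (LFF * LGG - LFG ^+ 2) = 0 ->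
  k 0%N 0%N = 2 * LF * (- (sg * U)) -> k 0%N 1%N = 0 -> k 0%N 2%N = 0 ->
  k 1%N 0%N = 0 -> k 1%N 1%N = - 4 * LFF * U + 2 * LFG * (- G * - (sg * U)) -> k 1%N 2%N = - 4 * LFF * (- G * - (sg * U)) + 2 * LFG * (U - F * - (sg * U)) ->
  k 2%N 0%N = 0 -> k 2%N 1%N = 2 * LFG * U - LGG * (- G * - (sg * U)) -> k 2%N 2%N = 2 * LFG * (- G * - (sg * U)) - LGG * (U - F * - (sg * U)) ->
  ('X - (- 2 * LF * - (sg * U))%:P) * \det (('X - (- 2 * LF * - (sg * U))%:P)%:M - map_mx polyC (\matrix_(i < 3, j < 3) k i j)) =
   'X ^+ 2 * ('X - (2 * LF * sg * U)%:P) *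
   ('X - ((4 * LF * sg - 4 * LFF + 4 * LFG * G * sg - LGG * (1 + F * sg)) * U)%:P).
Proof.
move=> HQ k00 k01 k02 k10 k11 k12 k20 k21 k22.
rewrite det3K /= k00 k01 k02 k10 k11 k12 k20 k21 k22.
match goal with |- _ = ?r => transitivity (r + ('X - (- 2 * LF * - (sg * U))%:P) * 'X * (U ^+ 2 *
  ((4 * LF ^+ 2 + 8 * LF * LFG * G - 2 * LF * LGG * F - 4 * (LFF * LGG - LFG ^+ 2) * G ^+ 2) * sg ^+ 2
   - (8 * LF * LFF + 2 * LF * LGG - 4 * (LFF * LGG - LFG ^+ 2) * F) * sg + 4 * (LFF * LGG - LFG ^+ 2)))%:P) end;
  last by rewrite HQ mulr0 polyC0 mulr0 addr0.
match goal with |- ?G => idtac G end. ring.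
Qed.

Unset Implicit Arguments.

Theorem proposition2 (R : rcfType) (g : 'M[R]_4) (c0 : R) (Fm : 'M[R]_4)
  (LF LFF LFG LGG : R) (p : 'I_4 -> R) (sigma : R) :
  lorentzian g -> volume_form g c0 ->
  Fm^T = - Fm ->
  let F := invarF g Fm in
  let G := invarG g c0 Fm in
  LF != 0 ->
  Mc LF LFF LFG LGG F G != 0 ->
  0 <= sigma_disc LF LFF LFG LGG F G ->
  1 + sigma_plus LF LFF LFG LGG F G * F
    - (sigma_plus LF LFF LFG LGG F G) ^+ 2 * G ^+ 2 != 0 ->
  1 + sigma_minus LF LFF LFG LGG F G * F
    - (sigma_minus LF LFF LFG LGG F G) ^+ 2 * G ^+ 2 != 0 ->
  (exists a, p a != 0) ->
  (sigma = sigma_plus LF LFF LFG LGG F G \/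
   sigma = sigma_minus LF LFF LFG LGG F G) ->
  let u := contrv g Fm p in
  dot g p p + sigma * dot g u u = 0 ->
  let lam3 := 2 * LF * sigma * dot g u u in
  let lam4 := (4 * LF * sigma - 4 * LFF + 4 * LFG * G * sigma
               - LGG * (1 + F * sigma)) * dot g u u in
  char_poly (Mmat g c0 Fm LF LFF LFG LGG p)
    = 'X ^+ 2 * ('X - lam3%:P) * ('X - lam4%:P).
Proof.
move=> Hl Hv FmA F G _ M0 Hdisc _ _ _ Hsig u Hc lam3 lam4.
have [Epu Epv Euv Evv dsym] := transport p Hl Hv FmA.
set v := contrv g (hodge g c0 Fm) p in Epv Euv Evv.
have HQ : (4 * LF ^+ 2 + 8 * LF * LFG * G - 2 * LF * LGG * F - 4 * (LFF * LGG - LFG ^+ 2) * G ^+ 2) * sigma ^+ 2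
   - (8 * LF * LFF + 2 * LF * LGG - 4 * (LFF * LGG - LFG ^+ 2) * F) * sigma + 4 * (LFF * LGG - LFG ^+ 2) = 0.
  have E1 : (4 * LF ^+ 2 + 8 * LF * LFG * G - 2 * LF * LGG * F - 4 * (LFF * LGG - LFG ^+ 2) * G ^+ 2) * sigma ^+ 2
   - (8 * LF * LFF + 2 * LF * LGG - 4 * (LFF * LGG - LFG ^+ 2) * F) * sigma + 4 * (LFF * LGG - LFG ^+ 2) =
   4 * (Mc LF LFF LFG LGG F G * sigma ^+ 2 - Nc LF LFF LFG LGG F * sigma + Pc LFF LFG LGG).
    by rewrite /Mc /Nc /Pc; field.
  rewrite E1.
  have Hs : (sigma - Nc LF LFF LFG LGG F / (2 * Mc LF LFF LFG LGG F G)) ^+ 2 = sigma_disc LF LFF LFG LGG F G.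
    case: Hsig => ->; rewrite /sigma_plus /sigma_minus.
      by rewrite addrAC subrr add0r sqr_sqrtr.
    by rewrite addrAC subrr add0r sqrrN sqr_sqrtr.
  move: Hs; rewrite /sigma_disc.
  move: M0; set Mv := Mc _ _ _ _ _ _; set Nv := Nc _ _ _ _ _; set Pv := Pc _ _ _ => M0 Hs.
  have -> : Mv * sigma ^+ 2 - Nv * sigma + Pv =
     Mv * ((sigma - Nv / (2 * Mv)) ^+ 2 - (Nv ^+ 2 / (4 * Mv ^+ 2) - Pv / Mv)).
    by field.
  by rewrite Hs subrr mulr0 mulr0.
have Epp : dot g p p = - (sigma * dot g u u).
  by apply/eqP; rewrite -addr_eq0 Hc.
pose Xm : 'M[R]_(4, 3) := \matrix_(i < 4, k < 3) nth 0 [:: p i; u i; v i] k.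
pose Zm : 'M[R]_(3, 4) := \matrix_(k < 3, d < 4)
   nth 0 [:: 2 * LF * raise1 g p d; - 4 * LFF * raise1 g u d + 2 * LFG * raise1 g v d;
             2 * LFG * raise1 g u d - LGG * raise1 g v d] k.
have hmM : Mmat g c0 Fm LF LFF LFG LGG p = (- 2 * LF * dot g p p)%:M + Xm *m Zm.
  apply/matrixP => b d; rewrite !mxE !big_ord_recr big_ord0 /= !mxE /= -/u -/v mulr_natr.
  ring.
pose kf := fun i j : nat => nth 0 (nth [::] [::
   [:: 2 * LF * dot g p p; 2 * LF * dot g u p; 2 * LF * dot g v p];
   [:: - 4 * LFF * dot g p u + 2 * LFG * dot g p v; - 4 * LFF * dot g u u + 2 * LFG * dot g u v;
       - 4 * LFF * dot g v u + 2 * LFG * dot g v v];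
   [:: 2 * LFG * dot g p u - LGG * dot g p v; 2 * LFG * dot g u u - LGG * dot g u v;
       2 * LFG * dot g v u - LGG * dot g v v]] i) j.
have hZX : Zm *m Xm = \matrix_(i < 3, j < 3) kf i j.
  apply/matrixP => i j; rewrite mxE [RHS]mxE; under eq_bigr => d _ do rewrite !mxE.
  case: i => [[|[|[|i]]] Hi] //; case: j => [[|[|[|j]]] Hj] //=; rewrite /kf /= /dot ?big_distrr /=;
   rewrite -?big_split -?sumrB /=; apply: eq_bigr => d _; ring.
have hcp : char_poly (Mmat g c0 Fm LF LFF LFG LGG p) =
   ('X - (- 2 * LF * dot g p p)%:P) * \det (('X - (- 2 * LF * dot g p p)%:P)%:M - map_mx polyC (\matrix_(i < 3, j < 3) kf i j)).
  rewrite /char_poly /char_poly_mx hmM map_mxD map_mxM map_scalar_mx.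
  have -> : 'X%:M - ((- 2 * LF * dot g p p)%:P%:M + map_mx polyC Xm *m map_mx polyC Zm) =
     ('X - (- 2 * LF * dot g p p)%:P)%:M - map_mx polyC Xm *m map_mx polyC Zm.
    by apply/matrixP => i j; rewrite !mxE mulrnBl; ring.
  by rewrite sylv ?polyXsubC_eq0 // -map_mxM hZX.
rewrite hcp Epp /lam3 /lam4.
apply: (@final_alg R LF LFF LFG LGG F G (dot g u u) sigma kf HQ);
  rewrite /kf /= ?(dsym v u) ?(dsym u p) ?(dsym v p) ?Epu ?Epv ?Euv ?Evv ?Epp /F /G /u; ring.
Qed.
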